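(* Let $X,Y$ be metrizable vector spaces over $K$ with metrics $d_X,d_Y$. If $d_Y$ is translation invariant and scale bounded on $Y$, then $B_d(X,Y)$ is a vector space under pointwise operations and $d$ is a translation invariant metric on it. Furthermore, if $Y$ is a normed space and $d_Y$ is the metric induced by its norm, then $B_d(X,Y)$ is a normed space with norm $\|F\|_{B_d(X,Y)}=d(F,0)$.
   Context: $K$ is $\mathbb{R}$ or $\mathbb{C}$. For maps $F_1,F_2:X\to Y$, $d(F_1,F_2)=\max\left\{\sup_{x\neq0,x\in X}\frac{d_Y[F_1(x),F_2(x)]}{d_X(x,0)},\ d_Y[F_1(0),F_2(0)]\right\}\in[0,\infty]$, and $B_d(X,Y)$ is the set of maps $F:X\to Y$ with $d(F,0)<\infty$. A translation invariant metric $d_Y$ is scale bounded on $Y$ if for every $\alpha\in K$ there is a positive number $C_\alpha$ with $d_Y(\alpha y,0)\le C_\alpha d_Y(y,0)$ for all $y\in Y$. *)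

(* Defs.v *)
From HB Require Import structures.
From mathcomp Require Import all_boot all_order all_algebra.
From mathcomp Require Import complex.
From mathcomp Require Import all_classical all_reals ereal.
Set Implicit Arguments. Unset Strict Implicit. Unset Printing Implicit Defensive.
Import Order.TTheory GRing.Theory Num.Theory.
Local Open Scope ring_scope.
Local Open Scope classical_set_scope.

(* Conventions: metric values are in a real field R : realType.  The scalar
   field K is either R (absolute value Num.norm) or R[i] (modulus Normc.normc);
   absK : K -> R is the absolute value of K. *)

Section Defs.
Variables (R : realType) (K : pzRingType) (absK : K -> R).

Definition is_metric (T : Type) (d : T -> T -> R) : Prop :=
  [/\ (forall x y, 0 <= d x y),
      (forall x y, d x y = 0 <-> x = y),
      (forall x y, d x y = d y x) &
      (forall x y z, d x z <= d x y + d y z)].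

Definition transl_inv (V : zmodType) (d : V -> V -> R) : Prop :=
  forall x y z, d (x + z) (y + z) = d x y.

Definition metric_vector_space (V : lmodType K) (d : V -> V -> R) : Prop :=
  [/\ is_metric d,
      (forall x y (e : R), 0 < e -> exists2 delta : R, 0 < delta &
         forall x' y', d x x' < delta -> d y y' < delta ->
                       d (x + y) (x' + y') < e) &
      (forall (a : K) x (e : R), 0 < e -> exists2 delta : R, 0 < delta &
         forall (a' : K) x', absK (a - a') < delta -> d x x' < delta ->
                       d (a *: x) (a' *: x') < e)].

Definition scale_bounded (V : lmodType K) (d : V -> V -> R) : Prop :=
  forall a : K, exists2 C : R, 0 < C & forall y : V, d (a *: y) 0 <= C * d y 0.

Definition dmap (X Y : lmodType K) (dX : X -> X -> R) (dY : Y -> Y -> R)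
  (F1 F2 : X -> Y) : \bar R :=
  Order.max
    (ereal_sup [set ((dY (F1 x) (F2 x)) / dX x 0)%:E | x in [set x | x != 0]])
    (dY (F1 0) (F2 0))%:E.

Definition Bd (X Y : lmodType K) (dX : X -> X -> R) (dY : Y -> Y -> R) :
  set (X -> Y) := [set F | (dmap dX dY F (fun _ : X => 0%R : Y) < +oo)%E].

Definition is_norm (V : lmodType K) (A : set V) (N : V -> R) : Prop :=
  [/\ (forall x, A x -> 0 <= N x),
      (forall x, A x -> N x = 0 -> x = 0),
      (forall (a : K) x, A x -> N (a *: x) = absK a * N x) &
      (forall x y, A x -> A y -> N (x + y) <= N x + N y)].

Definition theorem10_for : Prop :=
  forall (X Y : lmodType K) (dX : X -> X -> R) (dY : Y -> Y -> R),
  metric_vector_space dX -> metric_vector_space dY ->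
  transl_inv dY -> scale_bounded dY ->
  let B := Bd dX dY in
  let d := dmap dX dY in
  [/\ [/\ B (fun _ : X => 0%R : Y),
      (forall F G, B F -> B G -> B (fun x => F x + G x)) &
      (forall (a : K) F, B F -> B (fun x => a *: F x))],
      [/\ (forall F G, B F -> B G -> d F G \is a fin_num),
          (forall F G, B F -> B G -> (0 <= d F G)%E),
          (forall F G, B F -> B G -> (d F G = 0%E <-> F = G)),
          (forall F G, B F -> B G -> d F G = d G F) &
          (forall F G H, B F -> B G -> B H -> (d F H <= d F G + d G H)%E)],
      (forall F G H, B F -> B G -> B H ->
             d (fun x => F x + H x) (fun x => G x + H x) = d F G) &
      forall NY : Y -> R, is_norm setT NY ->
        (forall y1 y2, dY y1 y2 = NY (y1 - y2)) ->
        is_norm B (fun F => fine (d F (fun _ : X => 0%R : Y)))].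
End Defs.

(* Main.v *)
Require Import Defs.
From HB Require Import structures.
From mathcomp Require Import all_boot all_order all_algebra.
From mathcomp Require Import complex.
From mathcomp Require Import all_classical all_reals ereal.
Set Implicit Arguments. Unset Strict Implicit. Unset Printing Implicit Defensive.
Import Order.TTheory GRing.Theory Num.Theory.
Local Open Scope ring_scope.
Local Open Scope classical_set_scope.

Section S.
Variables (R : realType) (K : pzRingType) (absK : K -> R).
Variables (X Y : lmodType K) (dX : X -> X -> R) (dY : Y -> Y -> R).
Hypothesis hX : is_metric dX.
Hypothesis hY : is_metric dY.
Hypothesis tY : transl_inv dY.

Notation d := (dmap dX dY).

Lemma dmap_ub0 (F G : X -> Y) : ((dY (F 0) (G 0))%:E <= d F G)%E.
Proof. by rewrite /dmap le_max lexx orbT. Qed.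

Lemma dmap_ub (F G : X -> Y) x : x != 0 ->
  ((dY (F x) (G x) / dX x 0)%:E <= d F G)%E.
Proof.
move=> hx; rewrite /dmap le_max; apply/orP; left.
by apply: ereal_sup_ubound; exists x.
Qed.

Lemma dmap_le (F G : X -> Y) (m : R) : dY (F 0) (G 0) <= m ->
  (forall x, x != 0 -> dY (F x) (G x) / dX x 0 <= m) -> (d F G <= m%:E)%E.
Proof.
move=> h0 h; rewrite /dmap ge_max lee_fin h0 andbT.
by apply: ge_ereal_sup => _ [x /= hx <-]; rewrite lee_fin h.
Qed.

Lemma dX_pos x : x != 0 -> 0 < dX x 0.
Proof.
case: hX => ge0 eq0 _ _ hx; rewrite lt_def ge0 andbT.
by apply/eqP => /eq0 /eqP; rewrite (negbTE hx).
Qed.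

Lemma dmap_ge0 (F G : X -> Y) : (0 <= d F G)%E.
Proof. case: hY => ge0 _ _ _; apply: le_trans (dmap_ub0 F G); by rewrite lee_fin. Qed.

Lemma dmap_fin_eq (F G : X -> Y) : (d F G < +oo)%E -> d F G = (fine (d F G))%:E.
Proof. by move=> h; rewrite fineK // ge0_fin_numE // dmap_ge0. Qed.

Lemma dmap_real_ub0 (F G : X -> Y) m : d F G = m%:E -> dY (F 0) (G 0) <= m.
Proof. by move=> h; have := dmap_ub0 F G; rewrite h lee_fin. Qed.

Lemma dmap_real_ub (F G : X -> Y) m x : d F G = m%:E -> x != 0 ->
  dY (F x) (G x) / dX x 0 <= m.
Proof. by move=> h hx; have := dmap_ub F G hx; rewrite h lee_fin. Qed.

Lemma divle a b c x : x != 0 -> a <= b + c ->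
  a / dX x 0 <= b / dX x 0 + c / dX x 0.
Proof.
move=> hx h; rewrite -mulrDl; apply: ler_wpM2r => //.
by rewrite invr_ge0 ltW // dX_pos.
Qed.

Lemma dY_add a b : dY (a + b) 0 <= dY a 0 + dY b 0.
Proof.
case: hY => _ _ _ tri.
apply: le_trans (tri _ b _) _.
by rewrite -{2}(add0r b) tY.
Qed.


Lemma dmap_tri_real (F G H : X -> Y) a b : d F G = a%:E -> d G H = b%:E ->
  (d F H <= (a + b)%:E)%E.
Proof.
case: hY => _ _ _ tri ha hb; apply: dmap_le.
  by apply: le_trans (tri _ (G 0) _) _; apply: lerD; [apply: dmap_real_ub0 ha|apply: dmap_real_ub0 hb].
move=> x hx; apply: le_trans (divle hx (tri _ (G x) _)) _.
by apply: lerD; [exact: dmap_real_ub ha hx|exact: dmap_real_ub hb hx].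
Qed.

Lemma dmap_sym (F G : X -> Y) : d F G = d G F.
Proof.
case: hY => _ _ sym _.
rewrite /dmap sym; congr (Order.max (ereal_sup _) _).
by apply/seteqP; split => _ [x hx <-]; exists x => //; rewrite sym.
Qed.

Lemma dmap_add_real (F G : X -> Y) a b : d F (fun _ : X => 0%R : Y) = a%:E -> d G (fun _ : X => 0%R : Y) = b%:E ->
  (d (fun x => (F x + G x)%R) (fun _ : X => 0%R : Y) <= (a + b)%:E)%E.
Proof.
move=> ha hb; apply: dmap_le.
  by apply: le_trans (dY_add _ _) _; apply: lerD; [apply: dmap_real_ub0 ha|apply: dmap_real_ub0 hb].
move=> x hx; apply: le_trans (divle hx (dY_add _ _)) _.
by apply: lerD; [exact: dmap_real_ub ha hx|exact: dmap_real_ub hb hx].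
Qed.

End S.

Lemma gen (R : realType) (K : pzRingType) (absK : K -> R) :
  (forall a, 0 <= absK a) -> theorem10_for absK.
Proof.
move=> habs X Y dX dY [hX _ _] [hY _ _] tY sbY B d.
have hY' := hY; case: hY' => Yge0 Yeq0 Ysym Ytri.
set O := (fun _ : X => 0%R : Y).
have dfin : forall F, B F -> d F O = (fine (d F O))%:E.
  by move=> F hF; apply: (dmap_fin_eq hY).
have dGF : forall F G, B F -> B G ->
    (d F G <= (fine (d F O) + fine (d G O))%:E)%E.
  move=> F G hF hG; apply: (dmap_tri_real hX hY (dfin F hF)).
  by rewrite (dmap_sym dX hY) -dfin.
have finFG : forall F G, B F -> B G -> d F G = (fine (d F G))%:E.
  move=> F G hF hG; apply: (dmap_fin_eq hY).
  by apply: le_lt_trans (dGF F G hF hG) _; rewrite ltry.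
have B0 : B O.
  rewrite /B /Bd /=; apply: (@le_lt_trans _ _ 0%:E); last by rewrite ltry.
  apply: dmap_le => //; first by rewrite (proj2 (Yeq0 _ _)).
  by move=> x _; rewrite (proj2 (Yeq0 _ _)) // mul0r.
have BD : forall F G, B F -> B G -> B (fun x => F x + G x).
  move=> F G hF hG; rewrite /B /Bd /=.
  apply: le_lt_trans (dmap_add_real hX hY tY (dfin F hF) (dfin G hG)) _.
  by rewrite ltry.
have BZ : forall (a : K) F, B F -> B (fun x => a *: F x).
  move=> a F hF; rewrite /B /Bd /=.
  have [C C0 hC] := sbY a.
  have hm := dfin F hF; set m := fine _ in hm.
  apply: (@le_lt_trans _ _ (C * m)%:E); last by rewrite ltry.
  apply: dmap_le => //.
    apply: le_trans (hC _) _; apply: ler_wpM2l; [exact: ltW|].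
    exact: dmap_real_ub0 hm.
  move=> x hx; apply: le_trans (ler_wpM2r _ (hC _)) _.
    by rewrite invr_ge0 ltW // (dX_pos hX).
  rewrite -mulrA; apply: ler_wpM2l; [exact: ltW|].
  exact: (dmap_real_ub hm).
have Z0 : forall F G, B F -> B G -> (d F G = 0%E <-> F = G).
  move=> F G hF hG; split.
    move=> h0; apply: funext => x.
    have [->|hx] := eqVneq x 0.
      apply/Yeq0/le_anti; rewrite Yge0 andbT.
      by apply: (dmap_real_ub0 (F:=F) (G:=G) (m:=0)); exact: h0.
    apply/Yeq0.
    have := dmap_real_ub (x:=x) (m:=0) (F:=F) (G:=G) (dX:=dX) (dY:=dY) h0 hx.
    have hp := dX_pos hX hx.
    rewrite ler_pdivrMr // mul0r => hle.
    by apply/le_anti; rewrite hle Yge0.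
  move=> <-; apply/le_anti; rewrite (dmap_ge0 dX hY) andbT.
  apply: dmap_le; first by rewrite (proj2 (Yeq0 _ _)).
  by move=> x _; rewrite (proj2 (Yeq0 _ _)) // mul0r.
split.
- by split.
- split.
  + by move=> F G hF hG; rewrite finFG.
  + by move=> F G _ _; apply: (dmap_ge0 dX hY).
  + exact: Z0.
  + by move=> F G _ _; apply: (dmap_sym dX hY).
  + move=> F G H hF hG hH.
    rewrite (finFG F G) // (finFG G H) //.
    rewrite -EFinD. exact: (dmap_tri_real hX hY (finFG F G hF hG) (finFG G H hG hH)).
- move=> F G H _ _ _; rewrite /d /dmap /= tY.
  congr (Order.max (ereal_sup _) _).
  by apply/seteqP; split => _ [x hx <-]; exists x => //=; rewrite tY.
- move=> NY [N0 N1 NZ ND] hdN; split.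
  + by move=> F _; apply: fine_ge0; apply: (dmap_ge0 dX hY).
  + move=> F hF h; apply/(Z0 F O hF B0).
    by rewrite dfin // h.
  + move=> a F hF.
    have hm := dfin F hF; set m := fine (d F O) in hm *.
    have hm' := dfin _ (BZ a F hF); set m' := fine _ in hm' *.
    have ndY : forall y, dY y 0 = NY y by move=> y; rewrite hdN subr0.
    apply/le_anti/andP; split.
      rewrite -lee_fin -hm'; apply: dmap_le.
        rewrite ndY NZ // -ndY; apply: ler_wpM2l => //.
        exact: dmap_real_ub0 hm.
      move=> x hx; rewrite ndY NZ // -ndY -mulrA; apply: ler_wpM2l => //.
      exact: dmap_real_ub hm hx.
    have [a0|apos] := eqVneq (absK a) 0.
      by rewrite a0 mul0r /m'; apply: fine_ge0; apply: (dmap_ge0 dX hY).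
    have ap : 0 < absK a by rewrite lt_def apos habs.
    rewrite mulrC -ler_pdivlMr // -lee_fin -hm; apply: dmap_le.
      rewrite ler_pdivlMr // mulrC ndY -NZ // -ndY.
      exact: (dmap_real_ub0 (F:=fun x => a *: F x) hm').
    move=> x hx; rewrite ler_pdivlMr // mulrC mulrA ndY -NZ // -ndY.
    exact: (dmap_real_ub (F:=fun x => a *: F x) hm' hx).
  + move=> F G hF hG.
    have := dmap_add_real hX hY tY (dfin F hF) (dfin G hG).
    by move=> h; rewrite -lee_fin -(dfin _ (BD F G hF hG)); exact: h.
Qed.

Lemma normc_ge0' (R : realType) (z : R[i]) : 0 <= Normc.normc z.
Proof. by case: z => a b /=; apply: sqrtr_ge0. Qed.

Theorem theorem10 (R : realType) :
  theorem10_for (K := R) (Num.norm : R -> R) /\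
  theorem10_for (K := R[i]) (@Normc.normc R).
Proof.
split; apply: gen; [exact: normr_ge0 | exact: normc_ge0'].
Qed.
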